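(* Let $k\ge1$ be an integer and $\rho\in(0,1)$. For every $C\in\big[1,\tfrac{2+\rho^k}{2-\rho^k}\big]$, $$\tilde\rho(C)=\frac{C+1}{2}\rho^k-\frac{C-1}{2}.$$
   Context: $\mathbb{R}_k[X]$ denotes real polynomials of degree at most $k$, and $\|p\|_1$ is the sum of absolute values of the coefficients of $p$. For $C\ge1$, $\tilde\rho(C)=\min\{\max_{x\in[0,\rho]}|p(x)| : p\in\mathbb{R}_k[X],\ p(1)=1,\ \|p\|_1\le C\}$. *)

(* Defs.v *)
From HB Require Import structures.
From mathcomp Require Import all_boot all_order all_algebra.
From mathcomp Require Import reals.
Set Implicit Arguments. Unset Strict Implicit. Unset Printing Implicit Defensive.
Import Order.TTheory GRing.Theory Num.Theory.
Local Open Scope ring_scope.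

Definition l1norm (R : realType) (p : {poly R}) : R :=
  \sum_(i < size p) `|p`_i|.

Definition is_max_abs_on (R : realType) (p : {poly R}) (rho M : R) : Prop :=
  (exists2 x : R, 0 <= x <= rho & `|p.[x]| = M) /\
  (forall x : R, 0 <= x <= rho -> `|p.[x]| <= M).

Definition rho_tilde_vals (R : realType) (k : nat) (rho C : R) (M : R) : Prop :=
  exists p : {poly R},
    [/\ (size p <= k.+1)%N, p.[1] = 1, l1norm p <= C & is_max_abs_on p rho M].

Definition is_rho_tilde (R : realType) (k : nat) (rho C v : R) : Prop :=
  rho_tilde_vals k rho C v /\ (forall M, rho_tilde_vals k rho C M -> v <= M).

(* Main.v *)
Require Import Defs.
From HB Require Import structures.
From mathcomp Require Import all_boot all_order all_algebra.
From mathcomp Require Import reals.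
From mathcomp Require Import lra.
Import Order.TTheory GRing.Theory Num.Theory.
Local Open Scope ring_scope.

Theorem lemma2 (R : realType) (k : nat) (rho C : R) :
  (1 <= k)%N -> 0 < rho < 1 ->
  1 <= C <= (2 + rho ^+ k) / (2 - rho ^+ k) ->
  is_rho_tilde k rho C ((C + 1) / 2 * rho ^+ k - (C - 1) / 2).
Proof.
move=> k1 /andP[r0 r1] /andP[C1 C2].
set r := rho ^+ k.
have r0' : 0 <= r by rewrite exprn_ge0 // ltW.
have r1' : r <= 1 by rewrite exprn_ile1 // ltW.
have hC : (C + 1) * r >= 2 * (C - 1).
  have h2 : 0 < 2 - r by lra.
  move: C2; rewrite ler_pdivlMr // -/r => C2; nra.
split.
- pose a := (C + 1) / 2; pose b := (C - 1) / 2.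
  exists (a *: 'X^k - b%:P).
  have Ha : 1 <= a by rewrite /a; lra.
  have Hb : 0 <= b by rewrite /b; lra.
  split.
  + rewrite (leq_trans (size_polyD _ _)) // geq_max size_polyN size_polyC.
    rewrite (leq_trans (size_scale_leq _ _)) ?size_polyXn //.
    by case: (b != 0).
  + rewrite hornerE /= !hornerE expr1n /a /b; lra.
  + have Hs : (size (a *: 'X^k - b%:P)%R <= k.+1)%N.
      rewrite (leq_trans (size_polyD _ _)) // geq_max size_polyN size_polyC.
      rewrite (leq_trans (size_scale_leq _ _)) ?size_polyXn //.
      by case: (b != 0).
    destruct k as [|k']; first by [].
    rewrite /l1norm (big_ord_widen _ (fun i => `|(a *: 'X^(k'.+1) - b%:P)`_i|) Hs).
    rewrite (big_mkcond (fun i : 'I_k'.+2 => (i < _)%N)) /=.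
    rewrite (eq_bigr (fun i : 'I_k'.+2 => `|(a *: 'X^(k'.+1) - b%:P)`_i|)); last first.
      move=> i _; case: ltnP => // hi.
      by rewrite nth_default // normr0.
    rewrite big_ord_recr /= big_ord_recl /= big1; last first.
      move=> i _; rewrite coefB coefZ coefXn coefC /=.
      have -> : (bump 0 i == k'.+1) = false.
        by apply/negbTE; rewrite neq_ltn; apply/orP; left; rewrite /bump /=; case: i.
      by rewrite mulr0 subr0 normr0.
    rewrite !coefB !coefZ !coefXn !coefC eqxx.
    have -> : (0 == k'.+1)%N = false by [].
    have -> : (k'.+1 == 0)%N = false by [].
    rewrite mulr0 mulr1 sub0r subr0 normrN addr0 ger0_norm ?ger0_norm; try lra.
    rewrite /a /b; lra.
  + split.
    * exists rho; first by rewrite (ltW r0) le_refl.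
      rewrite !hornerE -/r ger0_norm /a /b //; nra.
    * move=> x /andP[x0 xr].
      rewrite !hornerE.
      have hx : x ^+ k <= r by rewrite /r lerXn2r // nnegrE // ltW.
      have hx0 : 0 <= x ^+ k by rewrite exprn_ge0.
      rewrite ler_norml; apply/andP; split; rewrite /a /b; nra.
- move=> M [p [sp p1 l1 [_ Hmax]]].
  have Hr := Hmax rho; rewrite (ltW r0) le_refl /= in Hr.
  have Hr' := Hr isT.
  apply: le_trans Hr'; apply: le_trans (ler_norm _).
  have E1 : p.[1] = \sum_(i < size p) p`_i.
    by rewrite horner_coef; apply: eq_bigr => i _; rewrite expr1n mulr1.
  have key : \sum_(i < size p) (p`_i - p`_i * rho ^+ i)
      <= \sum_(i < size p) ((`|p`_i| + p`_i) / 2 * (1 - r)).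
    apply: ler_sum => i _.
    have hi : (i <= k)%N by rewrite -ltnS (leq_trans (ltn_ord i) sp).
    have hri : r <= rho ^+ i by rewrite /r ler_wiXn2l // ltW.
    have hri1 : rho ^+ i <= 1 by rewrite exprn_ile1 // ltW.
    case: (lerP 0 p`_i) => hc.
    + rewrite ger0_norm //; nra.
    + rewrite ltr0_norm //; nra.
  rewrite -mulr_suml -mulr_suml big_split /= in key.
  rewrite big_split /= sumrN -E1 p1 -horner_coef in key.
  rewrite /l1norm in l1.
  nra.
Qed.
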